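(* Let $m$ be a positive integer and $0<\theta<1$. For each positive integer $n$ let $\phi_n$ be the unique root in $(0,1)$ of $\phi^{n+1}+\phi^n-1$, and set $\phi_0=0$. If $\theta\in[\phi_{m-1}^2,\phi_m^2]$ (with $\theta>0$), then $L_m(\theta)\le L_{m'}(\theta)$ for every positive integer $m'$, i.e. $m$ is an optimal coding parameter at precision $\rho/\tau\to0$.
   Context: $\lg$ denotes $\log_2$. For a positive integer $m$ and $0<\theta<1$, the asymptotic (precision $\rho/\tau\to0$) average code length of the modified Rice-Golomb code for Laplace-distributed residuals is $$L_m(\theta)=\begin{cases}1+\lg m+\dfrac{\theta^{m/2}}{1-\theta^{m/2}}, & m=2^\beta \text{ for some integer } \beta\ge0,\\[2mm] 1+\lfloor\lg m\rfloor+\dfrac{\theta^{(2^{\lceil\lg m\rceil}-m)/2}}{1-\theta^{m/2}}, & \text{otherwise.}\end{cases}$$ *)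

(* Defs.v *)
From Stdlib Require Import Reals Arith PeanoNat.
Open Scope R_scope.

Definition lg (x : R) : R := ln x / ln 2.

(* Asymptotic average code length L_m(theta) of the modified Rice-Golomb code.
   floor(lg m) = Nat.log2 m, ceil(lg m) = Nat.log2_up m (for m >= 1);
   theta^x is the real power Rpower theta x (theta > 0). *)
(* The test 2^(floor lg m) = m decides whether m = 2^beta for some beta >= 0. *)
Definition L (m : nat) (theta : R) : R :=
  if Nat.eqb (2 ^ Nat.log2 m) m then
    1 + lg (INR m) + Rpower theta (INR m / 2) / (1 - Rpower theta (INR m / 2))
  else
    1 + INR (Nat.log2 m)
      + Rpower theta (INR (2 ^ Nat.log2_up m - m) / 2)
        / (1 - Rpower theta (INR m / 2)).

Definition is_phi (n : nat) (a : R) : Prop :=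
  match n with
  | O => a = 0
  | S _ => 0 < a < 1 /\ a ^ (S n) + a ^ n - 1 = 0
  end.

(* Main.v *)
Require Import Defs.
From Stdlib Require Import Reals Lra Lia Arith.
Open Scope R_scope.

Lemma pow_le1 (s : R) (d : nat) : 0 <= s <= 1 -> s ^ d <= 1.
Proof.
  intros H; induction d; simpl; [lra|].
  assert (0 <= s ^ d) by (apply pow_le; lra).
  nra.
Qed.

Lemma pow_dec (s : R) (a b : nat) : 0 <= s <= 1 -> (a <= b)%nat -> s ^ b <= s ^ a.
Proof.
  intros H Hab. replace b with (a + (b - a))%nat by lia.
  rewrite pow_add. assert (0 <= s ^ a) by (apply pow_le; lra).
  assert (s ^ (b - a) <= 1) by (apply pow_le1; lra). nra.
Qed.

Lemma ln2_pos : 0 < ln 2.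
Proof. rewrite <- ln_1. apply ln_increasing; lra. Qed.

Lemma Lform (m : nat) (theta : R) : (0 < m)%nat -> 0 < theta ->
  L m theta = 1 + INR (Nat.log2 m)
    + sqrt theta ^ (2 ^ S (Nat.log2 m) - m) / (1 - sqrt theta ^ m).
Proof.
  intros Hm Ht.
  assert (Rpw : forall n, Rpower theta (INR n / 2) = sqrt theta ^ n).
  { intros n. unfold Rdiv. rewrite Rmult_comm, <- Rpower_mult, Rpower_sqrt by lra.
    apply Rpower_pow. apply sqrt_lt_R0; lra. }
  unfold L. rewrite !Rpw.
  destruct (Nat.eqb_spec (2 ^ Nat.log2 m) m) as [E|E].
  - assert (Hc : (2 ^ S (Nat.log2 m) - m = m)%nat).
    { rewrite Nat.pow_succ_r'. lia. }
    rewrite Hc. f_equal. f_equal.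
    unfold lg. rewrite <- E at 1. rewrite pow_INR, ln_pow by (simpl; lra).
    simpl (INR 2). replace (1+1) with 2 by ring. field. pose proof ln2_pos; lra.
  - assert (Hu : Nat.log2_up m = S (Nat.log2 m)).
    { pose proof (Nat.le_log2_log2_up m). pose proof (Nat.le_log2_up_succ_log2 m).
      assert (Nat.log2 m <> Nat.log2_up m).
      { intro Heq. apply (Nat.log2_log2_up_exact m Hm) in Heq.
        destruct Heq as [b Hb]. apply E. rewrite Hb, Nat.log2_pow2; lia. }
      lia. }
    rewrite Hu. reflexivity.
Qed.

Lemma step (m : nat) (theta : R) : (0 < m)%nat -> 0 < theta < 1 ->
  exists c : nat,
  L (S m) theta - L m theta =
   sqrt theta ^ c * (1 - sqrt theta) * (1 - sqrt theta ^ m - sqrt theta ^ S m)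
   / ((1 - sqrt theta ^ m) * (1 - sqrt theta ^ S m)).
Proof.
  intros Hm Ht. set (s := sqrt theta).
  assert (Hs0 : 0 < s) by (apply sqrt_lt_R0; lra).
  assert (Hs1 : s < 1).
  { unfold s. rewrite <- sqrt_1. apply sqrt_lt_1; lra. }
  assert (Hm1 : s ^ m < 1) by (apply pow_lt_1_compat; [lra|lia]).
  assert (Hm2 : s ^ S m < 1) by (apply pow_lt_1_compat; [lra|lia]).
  assert (HSm : s ^ S m = s * s ^ m) by reflexivity.
  rewrite !Lform by (lia || lra). fold s.
  pose proof (Nat.log2_spec m Hm) as [H1 H2].
  set (k := Nat.log2 m) in *.
  destruct (Nat.eq_dec (S m) (2 ^ S k)) as [E|E].
  - exists 0%nat.
    assert (Hl : Nat.log2 (S m) = S k) by (rewrite E; apply Nat.log2_pow2; lia).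
    rewrite Hl.
    assert (Hc1 : (2 ^ S k - m = 1)%nat) by lia.
    assert (Hc2 : (2 ^ S (S k) - S m = S m)%nat) by (rewrite (Nat.pow_succ_r' 2 (S k)); lia).
    rewrite Hc1, Hc2, S_INR. rewrite HSm. simpl (s ^ 1). simpl (s ^ 0).
    field. split; lra.
  - assert (Hl : Nat.log2 (S m) = k) by (apply Nat.log2_unique; lia).
    rewrite Hl.
    exists (2 ^ S k - S m)%nat.
    assert (Hc : (2 ^ S k - m = S (2 ^ S k - S m))%nat) by lia.
    rewrite Hc. rewrite HSm, <- tech_pow_Rmult.
    field. split; lra.
Qed.

Lemma step_up (m : nat) (theta : R) : (0 < m)%nat -> 0 < theta < 1 ->
  1 - sqrt theta ^ m - sqrt theta ^ S m >= 0 -> L m theta <= L (S m) theta.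
Proof.
  intros Hm Ht Hc. destruct (step m theta Hm Ht) as [c Hd].
  set (s := sqrt theta) in *.
  assert (Hs0 : 0 < s) by (apply sqrt_lt_R0; lra).
  assert (Hs1 : s < 1).
  { unfold s. rewrite <- sqrt_1. apply sqrt_lt_1; lra. }
  assert (Hm1 : s ^ m < 1) by (apply pow_lt_1_compat; [lra|lia]).
  assert (Hm2 : s ^ S m < 1) by (apply pow_lt_1_compat; [lra|lia]).
  assert (0 <= s ^ c) by (apply pow_le; lra).
  assert (0 <= s ^ c * (1 - s) * (1 - s ^ m - s ^ S m)
     / ((1 - s ^ m) * (1 - s ^ S m))).
  { apply Rmult_le_pos.
    - apply Rmult_le_pos; [apply Rmult_le_pos|]; lra.
    - left. apply Rinv_0_lt_compat. apply Rmult_lt_0_compat; lra. }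
  lra.
Qed.

Lemma step_down (m : nat) (theta : R) : (0 < m)%nat -> 0 < theta < 1 ->
  1 - sqrt theta ^ m - sqrt theta ^ S m <= 0 -> L (S m) theta <= L m theta.
Proof.
  intros Hm Ht Hc. destruct (step m theta Hm Ht) as [c Hd].
  set (s := sqrt theta) in *.
  assert (Hs0 : 0 < s) by (apply sqrt_lt_R0; lra).
  assert (Hs1 : s < 1).
  { unfold s. rewrite <- sqrt_1. apply sqrt_lt_1; lra. }
  assert (Hm1 : s ^ m < 1) by (apply pow_lt_1_compat; [lra|lia]).
  assert (Hm2 : s ^ S m < 1) by (apply pow_lt_1_compat; [lra|lia]).
  assert (0 <= s ^ c) by (apply pow_le; lra).
  assert (0 <= s ^ c * (1 - s) * - (1 - s ^ m - s ^ S m)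
     / ((1 - s ^ m) * (1 - s ^ S m))).
  { apply Rmult_le_pos.
    - apply Rmult_le_pos; [apply Rmult_le_pos|]; lra.
    - left. apply Rinv_0_lt_compat. apply Rmult_lt_0_compat; lra. }
  unfold Rdiv in *. lra.
Qed.

Theorem theorem3 (m : nat) (theta : R) :
  (0 < m)%nat -> 0 < theta < 1 ->
  forall phi_prev phi_m : R,
    is_phi (m - 1) phi_prev -> is_phi m phi_m ->
    phi_prev ^ 2 <= theta <= phi_m ^ 2 ->
    forall m' : nat, (0 < m')%nat -> L m theta <= L m' theta.
Proof.
  intros Hm Ht pp pm Hpp Hpm [Hlo Hhi] m' Hm'.
  set (s := sqrt theta).
  assert (Hs0 : 0 < s) by (apply sqrt_lt_R0; lra).
  assert (Hs1 : s < 1).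
  { unfold s. rewrite <- sqrt_1. apply sqrt_lt_1; lra. }
  destruct (le_lt_dec m m') as [Hle|Hlt].
  -
    destruct m as [|m0]; [lia|]. destruct Hpm as [[Hp0 Hp1] Hpe].
    assert (Hsp : s <= pm).
    { unfold s. rewrite <- (sqrt_pow2 pm) by lra. apply sqrt_le_1; nra. }
    replace m' with (S m0 + (m' - S m0))%nat by lia.
    induction (m' - S m0)%nat as [|d IH].
    + rewrite Nat.add_0_r; lra.
    + eapply Rle_trans; [apply IH|]. rewrite Nat.add_succ_r.
      apply step_up; [lia|lra|]. fold s.
      assert (s ^ (S m0 + d) <= s ^ S m0) by (apply pow_dec; [lra|lia]).
      assert (s ^ S (S m0 + d) <= s ^ S (S m0)) by (apply pow_dec; [lra|lia]).
      assert (s ^ S m0 <= pm ^ S m0) by (apply pow_incr; lra).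
      assert (s ^ S (S m0) <= pm ^ S (S m0)) by (apply pow_incr; lra).
      lra.
  -
    destruct m as [|[|j]]; [lia|lia|].
    replace (S (S j) - 1)%nat with (S j) in Hpp by lia.
    destruct Hpp as [[Hp0 Hp1] Hpe].
    assert (Hsp : pp <= s).
    { unfold s. rewrite <- (sqrt_pow2 pp) by lra. apply sqrt_le_1; nra. }
    assert (Hgen : forall d, (d <= S j)%nat -> L (S (S j)) theta <= L (S (S j) - d) theta).
    { induction d as [|d IH]; intros Hd.
      - rewrite Nat.sub_0_r; lra.
      - eapply Rle_trans; [apply IH; lia|].
        replace (S (S j) - d)%nat with (S (S (S j) - S d)) by lia.
        apply step_down; [lia|lra|]. fold s.
        assert (s ^ S j <= s ^ (S (S j) - S d)) by (apply pow_dec; [lra|lia]).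
        assert (s ^ S (S j) <= s ^ S (S (S j) - S d)) by (apply pow_dec; [lra|lia]).
        assert (pp ^ S j <= s ^ S j) by (apply pow_incr; lra).
        assert (pp ^ S (S j) <= s ^ S (S j)) by (apply pow_incr; lra).
        lra. }
    replace m' with (S (S j) - (S (S j) - m'))%nat by lia.
    apply Hgen. lia.
Qed.
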